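(* Let $\mathbb{S}\subseteq\mathbb{R}$ be an interval, let $Q:\mathbb{S}\to\mathbb{R}$ be continuous and twice differentiable, and let $q(z)=Q'(z)$. For $\mathbf{z}\in\mathbb{S}^K$ set $p_k(\mathbf{z})=e^{Q(z_k)}/\sum_{j=1}^K e^{Q(z_j)}$, $k=1,\dots,K$, and for $\hat{\mathbf{s}},\mathbf{s}\in\mathbb{S}^K$ define $$\mathcal{L}_m(\hat{\mathbf{s}},\mathbf{s})=\log\Big\{\sum_{k=1}^K e^{Q(\hat s_k)}\Big\}-\log\Big\{\sum_{k=1}^K e^{Q(s_k)}\Big\}-\sum_{k=1}^K(\hat s_k-s_k)\,q(s_k)\,p_k(\mathbf{s}).$$ If $Q$ is convex on $\mathbb{S}$ (equivalently, $q$ is monotonically non-decreasing on $\mathbb{S}$), then for every $\mathbf{s}\in\mathbb{S}^K$ the map $\hat{\mathbf{s}}\mapsto\mathcal{L}_m(\hat{\mathbf{s}},\mathbf{s})$ is convex on $\mathbb{S}^K$; it is the multi-class matching loss (Bregman divergence) of the primitive $H(\mathbf{z})=\log\sum_k e^{Q(z_k)}$, whose gradient components are $q(z_k)p_k(\mathbf{z})$.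
   Context: $p_k$ is the composite Softmax and $q$ the scaling function. The multi-class matching loss with primitive $H$ is $H(\hat{\mathbf{s}})-H(\mathbf{s})-(\hat{\mathbf{s}}-\mathbf{s})\cdot\nabla H(\mathbf{s})$. *)

(* Defs.v *)
From HB Require Import structures.
From mathcomp Require Import all_boot all_order all_algebra.
From mathcomp Require Import all_classical all_reals all_analysis.
Set Implicit Arguments. Unset Strict Implicit. Unset Printing Implicit Defensive.
Import Order.TTheory GRing.Theory Num.Theory numFieldNormedType.Exports.
Local Open Scope ring_scope.
Local Open Scope classical_set_scope.

Section Defs.
Variable R : realType.

Definition convex_on (S : set R) (f : R -> R) : Prop :=
  forall x y t, S x -> S y -> 0 <= t -> t <= 1 ->
    f (t * x + (1 - t) * y) <= t * f x + (1 - t) * f y.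

Definition convex_on_vec (K : nat) (S : set R) (F : ('I_K -> R) -> R) : Prop :=
  forall (x y : 'I_K -> R) t, (forall k, S (x k)) -> (forall k, S (y k)) ->
    0 <= t -> t <= 1 ->
    F (fun k => t * x k + (1 - t) * y k) <= t * F x + (1 - t) * F y.

Definition softmaxQ (Q : R -> R) (K : nat) (z : 'I_K -> R) (k : 'I_K) : R :=
  expR (Q (z k)) / \sum_(j < K) expR (Q (z j)).

Definition primH (Q : R -> R) (K : nat) (z : 'I_K -> R) : R :=
  ln (\sum_(k < K) expR (Q (z k))).

Definition matchLoss (Q : R -> R) (K : nat) (shat s : 'I_K -> R) : R :=
  primH Q shat - primH Q s
  - \sum_(k < K) (shat k - s k) * (derive1 Q (s k)) * softmaxQ Q s k.

Definition upd (K : nat) (z : 'I_K -> R) (k : 'I_K) (t : R) : 'I_K -> R :=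
  fun j => if j == k then t else z j.

End Defs.

(* Main.v *)
Require Import Defs.
From HB Require Import structures.
From mathcomp Require Import all_boot all_order all_algebra.
From mathcomp Require Import all_classical all_reals all_analysis.
From mathcomp Require Import ring lra.
Import Order.TTheory GRing.Theory Num.Theory numFieldNormedType.Exports.
Local Open Scope ring_scope.
Local Open Scope classical_set_scope.
Lemma sum_exp_gt0 (R : realType) K (i0 : 'I_K) (f : 'I_K -> R) :
  0 < \sum_(j < K) expR (f j).
Proof.
rewrite (bigD1 i0) //=.
have := @sumr_ge0 R _ (index_enum 'I_K) (fun j => j != i0) (fun j => expR (f j))
  (fun j _ => expR_ge0 (f j)).
have := expR_gt0 (f i0). lra.
Qed.

Lemma expR_conv (R : realType) (a b t : R) : 0 <= t -> t <= 1 ->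
  expR (t * a + (1 - t) * b) <= t * expR a + (1 - t) * expR b.
Proof.
move=> t0 t1; set m := t * a + (1 - t) * b.
have ha : expR a = expR m * expR (a - m) by rewrite -expRD; congr expR; ring.
have hb : expR b = expR m * expR (b - m) by rewrite -expRD; congr expR; ring.
rewrite ha hb.
have E0 := expR_gt0 m.
have h1 : t * expR m * (1 + (a - m)) <= t * expR m * expR (a - m).
  by apply: ler_wpM2l; [apply: mulr_ge0 => //; lra | exact: expR_ge1Dx].
have h2 : (1 - t) * expR m * (1 + (b - m)) <= (1 - t) * expR m * expR (b - m).
  by apply: ler_wpM2l; [apply: mulr_ge0 => //; lra | exact: expR_ge1Dx].
have h3 : expR m * (t * (a - m) + (1 - t) * (b - m)) = 0 by rewrite /m; ring.
nra.
Qed.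
Lemma primH_conv (R : realType) (Q : R -> R) K (i0 : 'I_K) (x y : 'I_K -> R) t :
  0 <= t -> t <= 1 ->
  (forall k, Q (t * x k + (1 - t) * y k) <= t * Q (x k) + (1 - t) * Q (y k)) ->
  primH Q (fun k => t * x k + (1 - t) * y k) <= t * primH Q x + (1 - t) * primH Q y.
Proof.
move=> t0 t1 hQ; rewrite /primH.
set A := \sum_(k < K) expR (Q (x k)).
set B := \sum_(k < K) expR (Q (y k)).
have A0 : 0 < A by exact: sum_exp_gt0.
have B0 : 0 < B by exact: sum_exp_gt0.
set c := t * ln A + (1 - t) * ln B.
rewrite -(expRK c) ler_ln ?posrE ?expR_gt0 //; last exact: sum_exp_gt0.
apply: (@le_trans _ _ (\sum_(k < K) expR c *
   (t * (expR (Q (x k)) / A) + (1 - t) * (expR (Q (y k)) / B)))).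
  apply: ler_sum => k _.
  have e1 : expR (Q (t * x k + (1 - t) * y k)) <=
            expR (t * Q (x k) + (1 - t) * Q (y k)) by rewrite ler_expR.
  apply: (le_trans e1).
  have -> : t * Q (x k) + (1 - t) * Q (y k)
     = c + (t * (Q (x k) - ln A) + (1 - t) * (Q (y k) - ln B)) by rewrite /c; ring.
  rewrite expRD; apply: ler_wpM2l; first exact: expR_ge0.
  have h := @expR_conv R (Q (x k) - ln A) (Q (y k) - ln B) t t0 t1.
  apply: (le_trans h).
  rewrite !expRB !lnK ?posrE //.
rewrite -mulr_sumr big_split /= -!mulr_sumr -!mulr_suml -/A -/B.
rewrite !divff ?gt_eqF //. lra.
Qed.

Theorem theorem4 (R : realType) (I : interval R) (Q : R -> R) (K : nat)
  (hK : (0 < K)%N)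
  (hcont : {within [set x : R | x \in I], continuous Q})
  (hdiff : forall x, interior [set y : R | y \in I] x ->
             derivable Q x 1 /\ derivable (derive1 Q) x 1)
  (hconv : convex_on [set x : R | x \in I] Q) :
  (forall s : 'I_K -> R, (forall k, s k \in I) ->
     convex_on_vec [set x : R | x \in I] (fun shat => matchLoss Q shat s))
  /\
  (forall (z : 'I_K -> R) (k : 'I_K), (forall j, z j \in I) ->
     derivable Q (z k) 1 ->
     derivable (fun t => primH Q (upd z k t)) (z k) 1 /\
     derive1 (fun t => primH Q (upd z k t)) (z k)
       = derive1 Q (z k) * softmaxQ Q z k).
Proof.
split.
  move=> s hs x y t hx hy t0 t1 /=; rewrite /matchLoss.
  have hP := @primH_conv R Q K (Ordinal hK) x y t t0 t1
    (fun k => hconv (x k) (y k) t (hx k) (hy k) t0 t1).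
  set L := fun w : 'I_K -> R =>
    \sum_(k < K) (w k - s k) * derive1 Q (s k) * softmaxQ Q s k.
  have hL : L (fun k => t * x k + (1 - t) * y k) = t * L x + (1 - t) * L y.
    rewrite /L !mulr_sumr -big_split; apply: eq_bigr => k _ /=; ring.
  rewrite -/(L _) -/(L x) -/(L y) hL.
  lra.
move=> z k hz dQ.
set C := \sum_(j < K | j != k) expR (Q (z j)).
set S := (expR \o Q) + cst C.
have hf : (fun t => primH Q (upd z k t)) = (@ln R) \o S.
  apply: funext => t; rewrite /primH /S /= (bigD1 k) //= /upd eqxx.
  congr (ln (_ + _)); apply: eq_bigr => j /negbTE -> //.
have dE : derivable (expR \o Q) (z k) 1.
  apply/derivable1_diffP; apply: differentiable_comp; first exact/derivable1_diffP.
  exact/derivable1_diffP/derivable_expR.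
have dS : derivable S (z k) 1 by apply: derivableD => //; exact: derivable_cst.
have Spos : 0 < S (z k).
  rewrite /S /= /C; have := expR_gt0 (Q (z k)).
  have := @sumr_ge0 R _ (index_enum 'I_K) (fun j => j != k) (fun j => expR (Q (z j)))
    (fun j _ => expR_ge0 _).
  rewrite [X in _ -> _ -> _ < X]/GRing.add /=; lra.
have dln : derivable (@ln R) (S (z k)) 1 by apply: ex_derive; exact: is_derive1_ln.
rewrite hf; split.
  apply/derivable1_diffP; apply: differentiable_comp; exact/derivable1_diffP.
rewrite derive1_comp // derive1E; have [_ ->] := is_derive1_ln Spos.
rewrite derive1E (deriveD dE (derivable_cst _ _ _)).
rewrite derive_cst addr0 -derive1E (derive1_comp dQ (@derivable_expR R (Q (z k)))).
rewrite [expR^`() _]derive1E derive_val.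
have hsum : S (z k) = \sum_(j < K) expR (Q (z j)).
  by rewrite [in RHS](bigD1 k) //.
rewrite /softmaxQ -hsum /=; ring.
Qed.
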